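(* Let $\mathcal{G}$ be the real Lie algebra with basis $X_1,X_2,X_3$ and brackets $[X_1,X_2]=X_3$, $[X_2,X_3]=X_1$, $[X_3,X_1]=X_2$ (Bianchi type $IX$). Every real Manin triple $(\mathcal{D},\mathcal{G}',\tilde{\mathcal{G}}')$ with $\mathcal{G}'\cong\mathcal{G}$ is isomorphic to exactly one Manin triple $(\mathcal{D},\mathcal{G},\tilde{\mathcal{G}})$ in which $\tilde{\mathcal{G}}$, written in the basis $\tilde X^1,\tilde X^2,\tilde X^3$ dual to $X_1,X_2,X_3$, has one of the following bracket structures: (a) (Bianchi $I$) $[\tilde X^1,\tilde X^2]=[\tilde X^2,\tilde X^3]=[\tilde X^3,\tilde X^1]=0$; (b) (Bianchi $V$) $[\tilde X^1,\tilde X^2]=-b\tilde X^2$, $[\tilde X^2,\tilde X^3]=0$, $[\tilde X^3,\tilde X^1]=b\tilde X^3$, for some $b>0$ (different $b$ giving non-isomorphic triples).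
   Context: A real Manin triple $(\mathcal{D},\mathcal{G},\tilde{\mathcal{G}})$ consists of a real Lie algebra $\mathcal{D}$ with a symmetric, ad-invariant, nondegenerate bilinear form $\langle\cdot,\cdot\rangle$, and two maximally isotropic Lie subalgebras $\mathcal{G},\tilde{\mathcal{G}}$ with $\mathcal{D}=\mathcal{G}\oplus\tilde{\mathcal{G}}$ as vector spaces; here $\dim\mathcal{D}=6$, $\dim\mathcal{G}=\dim\tilde{\mathcal{G}}=3$. Bases $X_i$ of $\mathcal{G}$ and $\tilde X^i$ of $\tilde{\mathcal{G}}$ are dual if $\langle X_i,X_j\rangle=0$, $\langle X_i,\tilde X^j\rangle=\delta_i^j$, $\langle\tilde X^i,\tilde X^j\rangle=0$. If $[X_i,X_j]=f_{ij}{}^kX_k$ and $[\tilde X^i,\tilde X^j]=\tilde f^{ij}{}_k\tilde X^k$, ad-invariance forces $[X_i,\tilde X^j]=f_{ki}{}^j\tilde X^k+\tilde f^{jk}{}_iX_k$, so the triple is determined by the brackets of $\mathcal{G}$ and $\tilde{\mathcal{G}}$ in dual bases (subject to the Jacobi identity of $\mathcal{D}$). Two Manin triples are isomorphic if there is a Lie algebra isomorphism of the doubles preserving the bilinear forms and mapping first subalgebra to first subalgebra and second to second; equivalently, they are related by a change of basis $X_i'=X_kA^k{}_i$, $\tilde X'^j=(A^{-1})^j{}_k\tilde X^k$. *)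

(* Defs.v *)
From HB Require Import structures.
From mathcomp Require Import all_boot all_order all_algebra.
From mathcomp Require Import reals.
Set Implicit Arguments. Unset Strict Implicit. Unset Printing Implicit Defensive.
Import Order.TTheory GRing.Theory Num.Theory.
Local Open Scope ring_scope.

Section Defs.
Variable R : realType.

(* Structure constants of a 3-dim algebra in a basis e_0,e_1,e_2:
   c i j k = c_{ij}^k, i.e.  [e_i, e_j] = \sum_k c i j k e_k. *)
Definition sc := 'I_3 -> 'I_3 -> 'I_3 -> R.

(* Vectors of the 6-dim double D = G (+) G~ written in the basis
   (X_1,X_2,X_3, X~^1,X~^2,X~^3): first component = coordinates on the X_i,
   second component = coordinates on the X~^i. *)
Definition Dv := (('I_3 -> R) * ('I_3 -> R))%type.

(* Bracket of D determined by f (brackets of G) and ft (brackets of G~):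
   [X_i,X_j] = f_{ij}^k X_k,  [X~^i,X~^j] = ft^{ij}_k X~^k,
   [X_i,X~^j] = f_{ki}^j X~^k + ft^{jk}_i X_k = - [X~^j, X_i],
   extended bilinearly. Here ft i j k = ft^{ij}_k. *)
Definition Dbr (f ft : sc) (x y : Dv) : Dv :=
  (fun k => \sum_(i < 3) \sum_(j < 3)
     (x.1 i * y.1 j * f i j k + x.1 i * y.2 j * ft j k i
      - x.2 j * y.1 i * ft j k i),
   fun k => \sum_(i < 3) \sum_(j < 3)
     (x.2 i * y.2 j * ft i j k + x.1 i * y.2 j * f k i j
      - x.2 j * y.1 i * f k i j)).

(* (f, ft) defines a Manin triple (D, G, G~) in dual bases: the bracket of D
   built from f and ft (with the mixed brackets forced by ad-invariance of the
   canonical pairing <X_i, X~^j> = delta_i^j) is a Lie bracket. *)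
Definition manin_triple (f ft : sc) : Prop :=
  (forall x y : Dv, forall k,
      (Dbr f ft x y).1 k = - (Dbr f ft y x).1 k /\
      (Dbr f ft x y).2 k = - (Dbr f ft y x).2 k) /\
  (forall x y z : Dv, forall k,
      (Dbr f ft x (Dbr f ft y z)).1 k + (Dbr f ft y (Dbr f ft z x)).1 k
        + (Dbr f ft z (Dbr f ft x y)).1 k = 0 /\
      (Dbr f ft x (Dbr f ft y z)).2 k + (Dbr f ft y (Dbr f ft z x)).2 k
        + (Dbr f ft z (Dbr f ft x y)).2 k = 0).

(* Lie algebra isomorphism G_f ~= G_g: an invertible linear map phi,
   phi(e_i) = \sum_k P k i e'_k, with phi [e_i,e_j] = [phi e_i, phi e_j]. *)
Definition lie_iso (f g : sc) : Prop :=
  exists P : 'M[R]_3, P \in unitmx /\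
    forall i j k, \sum_(c < 3) f i j c * P k c
                  = \sum_(a < 3) \sum_(b < 3) P a i * P b j * g a b k.

(* Structure constants after the change of basis X'_i = X_k A^k_i
   (A^k_i = A k i) and X~'^j = (A^{-1})^j_k X~^k. *)
Definition trans_f (f : sc) (A : 'M[R]_3) : sc := fun i j k =>
  \sum_(a < 3) \sum_(b < 3) \sum_(c < 3)
     A a i * A b j * f a b c * (invmx A) k c.
Definition trans_ft (ft : sc) (A : 'M[R]_3) : sc := fun i j k =>
  \sum_(a < 3) \sum_(b < 3) \sum_(c < 3)
     (invmx A) i a * (invmx A) j b * ft a b c * A c k.

Definition manin_iso (f ft g gt : sc) : Prop :=
  exists A : 'M[R]_3, A \in unitmx /\ g = trans_f f A /\ gt = trans_ft ft A.

Definition f_IX : sc := fun i j k =>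
  if [&& i == 0 :> nat, j == 1 :> nat & k == 2 :> nat] then 1
  else if [&& i == 1 :> nat, j == 2 :> nat & k == 0 :> nat] then 1
  else if [&& i == 2 :> nat, j == 0 :> nat & k == 1 :> nat] then 1
  else if [&& i == 1 :> nat, j == 0 :> nat & k == 2 :> nat] then -1
  else if [&& i == 2 :> nat, j == 1 :> nat & k == 0 :> nat] then -1
  else if [&& i == 0 :> nat, j == 2 :> nat & k == 1 :> nat] then -1
  else 0.

Definition ft_I : sc := fun _ _ _ => 0.

Definition ft_V (b : R) : sc := fun i j k =>
  if [&& i == 0 :> nat, j == 1 :> nat & k == 1 :> nat] then - b
  else if [&& i == 1 :> nat, j == 0 :> nat & k == 1 :> nat] then b
  else if [&& i == 2 :> nat, j == 0 :> nat & k == 2 :> nat] then b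
  else if [&& i == 0 :> nat, j == 2 :> nat & k == 2 :> nat] then - b
  else 0.

Definition IX_normal_form (gt : sc) : Prop :=
  gt = ft_I \/ exists b : R, 0 < b /\ gt = ft_V b.

End Defs.

(* Main.v *)
Require Import Defs.
From HB Require Import structures.
From mathcomp Require Import all_boot all_order all_algebra.
From mathcomp Require Import reals ring lra.
From Stdlib Require Import FunctionalExtensionality.
Import Order.TTheory GRing.Theory Num.Theory.
Local Open Scope ring_scope.



Definition i0 : 'I_3 := @Ordinal 3 0 isT.
Definition i1 : 'I_3 := @Ordinal 3 1 isT.
Definition i2 : 'I_3 := @Ordinal 3 2 isT.

Lemma sum3E (R : realType) (F : 'I_3 -> R) : \sum_(i < 3) F i = F i0 + F i1 + F i2.
Proof.
rewrite !big_ord_recr big_ord0 /= add0r.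
by congr (F _ + F _ + F _); apply: val_inj.
Qed.

Lemma ord3P (P : 'I_3 -> Prop) : P i0 -> P i1 -> P i2 -> forall i, P i.
Proof.
move=> h0 h1 h2 [[|[|[|m]]] Hi] //.
- by rewrite (_ : Ordinal Hi = i0) //; apply: val_inj.
- by rewrite (_ : Ordinal Hi = i1) //; apply: val_inj.
- by rewrite (_ : Ordinal Hi = i2) //; apply: val_inj.
Qed.

Lemma sum_delta_l (R : realType) (F : 'I_3 -> R) i :
  \sum_(a < 3) (1%:M : 'M[R]_3) i a * F a = F i.
Proof.
rewrite sum3E !mxE; elim/ord3P: i => /=; rewrite ?eqxx /=; ring.
Qed.

Lemma sum_delta_r (R : realType) (F : 'I_3 -> R) i :
  \sum_(a < 3) (1%:M : 'M[R]_3) a i * F a = F i.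
Proof.
rewrite sum3E !mxE; elim/ord3P: i => /=; rewrite ?eqxx /=; ring.
Qed.

Definition MF {R : realType} (f : sc R) (A : 'M[R]_3) (g : sc R) : Prop :=
  forall i j c, \sum_(a < 3) \sum_(b < 3) A a i * A b j * f a b c
              = \sum_(k < 3) g i j k * A c k.

Lemma MF_trans (R : realType) (f : sc R) (A : 'M[R]_3) :
  A \in unitmx -> MF f A (trans_f f A).
Proof.
move=> uA i j c.
transitivity (\sum_(r < 3) (A *m invmx A) c r *
   (\sum_(a < 3) \sum_(b < 3) A a i * A b j * f a b r)); last first.
  rewrite /trans_f; under [LHS]eq_bigr do rewrite mxE.
  rewrite !sum3E; ring.
by rewrite mulmxV // sum_delta_l.
Qed.

Lemma FM (R : realType) (f g : sc R) (A : 'M[R]_3) :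
  A \in unitmx -> MF f A g -> trans_f f A = g.
Proof.
move=> uA h; apply: functional_extensionality => i.
apply: functional_extensionality => j; apply: functional_extensionality => k.
transitivity (\sum_(c < 3) (\sum_(a < 3) \sum_(b < 3) A a i * A b j * f a b c) * invmx A k c).
  rewrite /trans_f !sum3E; ring.
under eq_bigr do rewrite h.
transitivity (\sum_(m < 3) (invmx A *m A) k m * g i j m).
  under [RHS]eq_bigr do rewrite mxE.
  rewrite !sum3E; ring.
by rewrite mulVmx // sum_delta_l.
Qed.

Lemma MF_inv (R : realType) (f g : sc R) (A : 'M[R]_3) :
  A \in unitmx -> MF f A g -> MF g (invmx A) f.
Proof.
move=> uA h; have e := @FM _ _ _ _ uA h; rewrite -e => i j r.
transitivity (\sum_(a < 3) (A *m invmx A) a i * \sum_(b < 3) (A *m invmx A) b j *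
   \sum_(c < 3) f a b c * invmx A r c).
  rewrite /trans_f !sum3E !mxE !sum3E; ring.
rewrite mulmxV //.
under eq_bigr do rewrite sum_delta_r.
by rewrite sum_delta_r.
Qed.

Lemma MF_chain (R : realType) (f g h : sc R) (A C : 'M[R]_3) :
  MF f A g -> MF g C h -> MF f (A *m C) h.
Proof.
move=> hA hC i j c.
transitivity (\sum_(p < 3) \sum_(q < 3) C p i * C q j *
   (\sum_(a < 3) \sum_(b < 3) A a p * A b q * f a b c)).
  rewrite !sum3E !mxE !sum3E; ring.
under eq_bigr do under eq_bigr do rewrite hA.
transitivity (\sum_(k < 3) A c k * (\sum_(p < 3) \sum_(q < 3) C p i * C q j * g p q k)).
  rewrite !sum3E; ring.
under eq_bigr do rewrite hC.
rewrite [RHS]sum3E !mxE !sum3E; ring.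
Qed.

Definition Tm {R : realType} (A B : 'M[R]_3) (x : Dv R) : Dv R :=
  (fun a => \sum_(i < 3) A a i * x.1 i, fun b => \sum_(j < 3) B j b * x.2 j).

Lemma cov1_gen (R : realType) (A B : 'M[R]_3) (f2 ft2 f ft : sc R) x y a :
  (forall i j, \sum_(k < 3) A a k * f2 i j k = \sum_(p < 3) \sum_(q < 3) A p i * A q j * f p q a) ->
  (forall j i, \sum_(k < 3) A a k * ft2 j k i = \sum_(p < 3) \sum_(s < 3) B j p * ft p a s * A s i) ->
  \sum_(k < 3) A a k * (Dbr f2 ft2 x y).1 k = (Dbr f ft (Tm A B x) (Tm A B y)).1 a.
Proof.
move=> h1 h2.
transitivity (\sum_(i < 3) \sum_(j < 3) (x.1 i * y.1 j * (\sum_(k < 3) A a k * f2 i j k)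
   + x.1 i * y.2 j * (\sum_(k < 3) A a k * ft2 j k i) - x.2 j * y.1 i * (\sum_(k < 3) A a k * ft2 j k i))).
  rewrite /Dbr /= !sum3E. ring.
under eq_bigr => i _ do under eq_bigr => j _ do rewrite h1 h2.
rewrite /Dbr /Tm /= !sum3E. ring.
Qed.

Lemma cov2_gen (R : realType) (A B : 'M[R]_3) (f2 ft2 f ft : sc R) x y b :
  (forall i j, \sum_(k < 3) B k b * ft2 i j k = \sum_(p < 3) \sum_(q < 3) B i p * B j q * ft p q b) ->
  (forall i j, \sum_(k < 3) B k b * f2 k i j = \sum_(q < 3) \sum_(r < 3) A q i * f b q r * B j r) ->
  \sum_(k < 3) B k b * (Dbr f2 ft2 x y).2 k = (Dbr f ft (Tm A B x) (Tm A B y)).2 b.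
Proof.
move=> h3 h4.
transitivity (\sum_(i < 3) \sum_(j < 3) (x.2 i * y.2 j * (\sum_(k < 3) B k b * ft2 i j k)
   + x.1 i * y.2 j * (\sum_(k < 3) B k b * f2 k i j) - x.2 j * y.1 i * (\sum_(k < 3) B k b * f2 k i j))).
  rewrite /Dbr /= !sum3E. ring.
under eq_bigr => i _ do under eq_bigr => j _ do rewrite h3 h4.
rewrite /Dbr /Tm /= !sum3E. ring.
Qed.

Lemma C1 (R : realType) (A : 'M[R]_3) (f : sc R) a i j : A \in unitmx ->
  \sum_(k < 3) A a k * trans_f f A i j k = \sum_(p < 3) \sum_(q < 3) A p i * A q j * f p q a.
Proof.
move=> uA.
transitivity (\sum_(r < 3) (A *m invmx A) a r * (\sum_(p < 3) \sum_(q < 3) A p i * A q j * f p q r)).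
  rewrite /trans_f !sum3E !mxE !sum3E; ring.
by rewrite mulmxV // sum_delta_l.
Qed.

Lemma C2 (R : realType) (A : 'M[R]_3) (ft : sc R) a i j : A \in unitmx ->
  \sum_(k < 3) A a k * trans_ft ft A j k i = \sum_(p < 3) \sum_(s < 3) invmx A j p * ft p a s * A s i.
Proof.
move=> uA.
transitivity (\sum_(q < 3) (A *m invmx A) a q * (\sum_(p < 3) \sum_(s < 3) invmx A j p * ft p q s * A s i)).
  rewrite /trans_ft !sum3E !mxE !sum3E; ring.
by rewrite mulmxV // sum_delta_l.
Qed.

Lemma C3 (R : realType) (A : 'M[R]_3) (ft : sc R) b i j : A \in unitmx ->
  \sum_(k < 3) invmx A k b * trans_ft ft A i j k = \sum_(p < 3) \sum_(q < 3) invmx A i p * invmx A j q * ft p q b.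
Proof.
move=> uA.
transitivity (\sum_(c < 3) (A *m invmx A) c b * (\sum_(p < 3) \sum_(q < 3) invmx A i p * invmx A j q * ft p q c)).
  rewrite /trans_ft !sum3E !mxE !sum3E; ring.
by rewrite mulmxV // sum_delta_r.
Qed.

Lemma C4 (R : realType) (A : 'M[R]_3) (f : sc R) b i j : A \in unitmx ->
  \sum_(k < 3) invmx A k b * trans_f f A k i j = \sum_(q < 3) \sum_(r < 3) A q i * f b q r * invmx A j r.
Proof.
move=> uA.
transitivity (\sum_(p < 3) (A *m invmx A) p b * (\sum_(q < 3) \sum_(r < 3) A q i * f p q r * invmx A j r)).
  rewrite /trans_f !sum3E !mxE !sum3E; ring.
by rewrite mulmxV // sum_delta_r.
Qed.

Lemma Tm_cov {R : realType} (A : 'M[R]_3) (f ft : sc R) x y : A \in unitmx ->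
  Tm A (invmx A) (Dbr (trans_f f A) (trans_ft ft A) x y) = Dbr f ft (Tm A (invmx A) x) (Tm A (invmx A) y).
Proof.
move=> uA.
rewrite [LHS]surjective_pairing [RHS]surjective_pairing; congr pair.
  apply: functional_extensionality => a /=.
  by apply: cov1_gen => *; [apply: C1 | apply: C2].
apply: functional_extensionality => b /=.
by apply: cov2_gen => *; [apply: C3 | apply: C4].
Qed.

Lemma Tm_inv1 {R : realType} (A : 'M[R]_3) z k : A \in unitmx ->
  z.1 k = \sum_(a < 3) invmx A k a * (Tm A (invmx A) z).1 a.
Proof.
move=> uA.
transitivity (\sum_(i < 3) (invmx A *m A) k i * z.1 i); first by rewrite mulVmx // sum_delta_l.
rewrite /Tm /= !sum3E !mxE !sum3E; ring.
Qed.

Lemma Tm_inv2 {R : realType} (A : 'M[R]_3) z k : A \in unitmx ->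
  z.2 k = \sum_(b < 3) A b k * (Tm A (invmx A) z).2 b.
Proof.
move=> uA.
transitivity (\sum_(j < 3) (invmx A *m A) j k * z.2 j); first by rewrite mulVmx // sum_delta_r.
rewrite /Tm /= !sum3E !mxE !sum3E; ring.
Qed.


Lemma sum3_jac {R : realType} (c F G H : 'I_3 -> R) :
  (forall a, F a + G a + H a = 0) ->
  \sum_(a < 3) c a * F a + \sum_(a < 3) c a * G a + \sum_(a < 3) c a * H a = 0.
Proof.
move=> h; rewrite !sum3E.
have e0 : F i0 = - (G i0 + H i0) by have := h i0; lra.
have e1 : F i1 = - (G i1 + H i1) by have := h i1; lra.
have e2 : F i2 = - (G i2 + H i2) by have := h i2; lra.
rewrite e0 e1 e2; ring.
Qed.

Lemma manin_transfer (R : realType) (A : 'M[R]_3) (f ft : sc R) :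
  A \in unitmx -> manin_triple f ft -> manin_triple (trans_f f A) (trans_ft ft A).
Proof.
move=> uA [H1 H2].
have cov := fun x y => @Tm_cov R A f ft x y uA.
split.
  move=> x y k; split.
    rewrite (Tm_inv1 _ (Dbr _ _ x y) k uA) (Tm_inv1 _ (Dbr _ _ y x) k uA) !cov -sumrN.
    by apply: eq_bigr => a _; rewrite (proj1 (H1 _ _ a)) mulrN.
  rewrite (Tm_inv2 _ (Dbr _ _ x y) k uA) (Tm_inv2 _ (Dbr _ _ y x) k uA) !cov -sumrN.
  by apply: eq_bigr => a _; rewrite (proj2 (H1 _ _ a)) mulrN.
move=> x y z k; split.
  rewrite (Tm_inv1 _ (Dbr _ _ x _) k uA) (Tm_inv1 _ (Dbr _ _ y _) k uA) (Tm_inv1 _ (Dbr _ _ z _) k uA) !cov.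
  by apply: sum3_jac => a; exact: (proj1 (H2 _ _ _ a)).
rewrite (Tm_inv2 _ (Dbr _ _ x _) k uA) (Tm_inv2 _ (Dbr _ _ y _) k uA) (Tm_inv2 _ (Dbr _ _ z _) k uA) !cov.
by apply: sum3_jac => a; exact: (proj2 (H2 _ _ _ a)).
Qed.



Definition bX {R : realType} (a : 'I_3) : Dv R :=
  (fun k : 'I_3 => if (nat_of_ord k == nat_of_ord a) then 1 else 0, fun _ => 0).
Definition bXt {R : realType} (a : 'I_3) : Dv R :=
  (fun _ => 0, fun k : 'I_3 => if (nat_of_ord k == nat_of_ord a) then 1 else 0).

Lemma LXz1 (R : realType) (f ft : sc R) a z k :
  (Dbr f ft (bX a) z).1 k = \sum_(j < 3) z.1 j * f a j k + \sum_(j < 3) z.2 j * ft j k a.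
Proof. rewrite /Dbr /= !sum3E; elim/ord3P: a => /=; ring. Qed.

Lemma LXtz1 (R : realType) (f ft : sc R) c z k :
  (Dbr f ft (bXt c) z).1 k = - \sum_(i < 3) z.1 i * ft c k i.
Proof. rewrite /Dbr /= !sum3E; elim/ord3P: c => /=; ring. Qed.

Lemma LXXt (R : realType) (f ft : sc R) b c :
  Dbr f ft (bX b) (bXt c) = (fun j => ft c j b, fun j => f j b c).
Proof.
rewrite /Dbr; congr pair; apply: functional_extensionality => k; rewrite !sum3E;
elim/ord3P: b => /=; elim/ord3P: c => /=; ring.
Qed.

Lemma LXtX (R : realType) (f ft : sc R) c a :
  Dbr f ft (bXt c) (bX a) = (fun j => - ft c j a, fun j => - f j a c).
Proof.
rewrite /Dbr; congr pair; apply: functional_extensionality => k; rewrite !sum3E;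
elim/ord3P: a => /=; elim/ord3P: c => /=; ring.
Qed.

Lemma LXX (R : realType) (f ft : sc R) a b :
  Dbr f ft (bX a) (bX b) = (fun j => f a b j, fun _ => 0).
Proof.
rewrite /Dbr; congr pair; apply: functional_extensionality => k; rewrite !sum3E;
elim/ord3P: a => /=; elim/ord3P: b => /=; ring.
Qed.

Lemma LXtXt (R : realType) (f ft : sc R) a b k :
  (Dbr f ft (bXt a) (bXt b)).2 k = ft a b k.
Proof. rewrite /Dbr /= !sum3E; elim/ord3P: a => /=; elim/ord3P: b => /=; ring. Qed.

Lemma anti_inst (R : realType) (f ft : sc R) a b k :
  manin_triple f ft -> ft a b k = - ft b a k.
Proof. by move=> [H1 _]; rewrite -(LXtXt _ f ft a b) -(LXtXt _ f ft b a); exact: (proj2 (H1 _ _ k)). Qed.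

Lemma jac_inst (R : realType) (f ft : sc R) a b c k :
  manin_triple f ft ->
  \sum_(j < 3) ft c j b * f a j k + \sum_(j < 3) f j b c * ft j k a
  - \sum_(j < 3) ft c j a * f b j k - \sum_(j < 3) f j a c * ft j k b
  - \sum_(i < 3) f a b i * ft c k i = 0.
Proof.
move=> [_ H2]; move: (proj1 (H2 (bX a) (bX b) (bXt c) k)).
rewrite LXXt LXtX LXX !LXz1 LXtz1 /= !sum3E => h; rewrite -h; ring.
Qed.

Definition dl {R : realType} (i k : 'I_3) : R := if nat_of_ord i == nat_of_ord k then 1 else 0.
Definition Vf {R : realType} (v : 'I_3 -> R) : sc R := fun i j k => v j * dl i k - v i * dl j k.
Definition Vvec {R : realType} (ft : sc R) : 'I_3 -> R := fun m =>
  if nat_of_ord m == 0%N then ft i2 i0 i2 else if nat_of_ord m == 1%N then ft i2 i1 i2 else - ft i2 i1 i1.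

Lemma V_form (R : realType) (ft : sc R) : manin_triple (f_IX R) ft -> ft = Vf (Vvec ft).
Proof.
move=> H.
have a000 := anti_inst _ _ _ i0 i0 i0 H.
have a001 := anti_inst _ _ _ i0 i0 i1 H.
have a002 := anti_inst _ _ _ i0 i0 i2 H.
have a010 := anti_inst _ _ _ i0 i1 i0 H.
have a011 := anti_inst _ _ _ i0 i1 i1 H.
have a012 := anti_inst _ _ _ i0 i1 i2 H.
have a020 := anti_inst _ _ _ i0 i2 i0 H.
have a021 := anti_inst _ _ _ i0 i2 i1 H.
have a022 := anti_inst _ _ _ i0 i2 i2 H.
have a100 := anti_inst _ _ _ i1 i0 i0 H.
have a101 := anti_inst _ _ _ i1 i0 i1 H.
have a102 := anti_inst _ _ _ i1 i0 i2 H.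
have a110 := anti_inst _ _ _ i1 i1 i0 H.
have a111 := anti_inst _ _ _ i1 i1 i1 H.
have a112 := anti_inst _ _ _ i1 i1 i2 H.
have a120 := anti_inst _ _ _ i1 i2 i0 H.
have a121 := anti_inst _ _ _ i1 i2 i1 H.
have a122 := anti_inst _ _ _ i1 i2 i2 H.
have a200 := anti_inst _ _ _ i2 i0 i0 H.
have a201 := anti_inst _ _ _ i2 i0 i1 H.
have a202 := anti_inst _ _ _ i2 i0 i2 H.
have a210 := anti_inst _ _ _ i2 i1 i0 H.
have a211 := anti_inst _ _ _ i2 i1 i1 H.
have a212 := anti_inst _ _ _ i2 i1 i2 H.
have a220 := anti_inst _ _ _ i2 i2 i0 H.
have a221 := anti_inst _ _ _ i2 i2 i1 H.
have a222 := anti_inst _ _ _ i2 i2 i2 H.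
move: (jac_inst _ _ _ i0 i1 i0 i0 H); rewrite !sum3E /f_IX /= => j0100.
move: (jac_inst _ _ _ i0 i1 i0 i1 H); rewrite !sum3E /f_IX /= => j0101.
move: (jac_inst _ _ _ i0 i1 i0 i2 H); rewrite !sum3E /f_IX /= => j0102.
move: (jac_inst _ _ _ i0 i1 i1 i0 H); rewrite !sum3E /f_IX /= => j0110.
move: (jac_inst _ _ _ i0 i1 i1 i1 H); rewrite !sum3E /f_IX /= => j0111.
move: (jac_inst _ _ _ i0 i1 i1 i2 H); rewrite !sum3E /f_IX /= => j0112.
move: (jac_inst _ _ _ i0 i1 i2 i0 H); rewrite !sum3E /f_IX /= => j0120.
move: (jac_inst _ _ _ i0 i1 i2 i1 H); rewrite !sum3E /f_IX /= => j0121.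
move: (jac_inst _ _ _ i0 i1 i2 i2 H); rewrite !sum3E /f_IX /= => j0122.
move: (jac_inst _ _ _ i0 i2 i0 i0 H); rewrite !sum3E /f_IX /= => j0200.
move: (jac_inst _ _ _ i0 i2 i0 i1 H); rewrite !sum3E /f_IX /= => j0201.
move: (jac_inst _ _ _ i0 i2 i0 i2 H); rewrite !sum3E /f_IX /= => j0202.
move: (jac_inst _ _ _ i0 i2 i1 i0 H); rewrite !sum3E /f_IX /= => j0210.
move: (jac_inst _ _ _ i0 i2 i1 i1 H); rewrite !sum3E /f_IX /= => j0211.
move: (jac_inst _ _ _ i0 i2 i1 i2 H); rewrite !sum3E /f_IX /= => j0212.
move: (jac_inst _ _ _ i0 i2 i2 i0 H); rewrite !sum3E /f_IX /= => j0220.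
move: (jac_inst _ _ _ i0 i2 i2 i1 H); rewrite !sum3E /f_IX /= => j0221.
move: (jac_inst _ _ _ i0 i2 i2 i2 H); rewrite !sum3E /f_IX /= => j0222.
move: (jac_inst _ _ _ i1 i2 i0 i0 H); rewrite !sum3E /f_IX /= => j1200.
move: (jac_inst _ _ _ i1 i2 i0 i1 H); rewrite !sum3E /f_IX /= => j1201.
move: (jac_inst _ _ _ i1 i2 i0 i2 H); rewrite !sum3E /f_IX /= => j1202.
move: (jac_inst _ _ _ i1 i2 i1 i0 H); rewrite !sum3E /f_IX /= => j1210.
move: (jac_inst _ _ _ i1 i2 i1 i1 H); rewrite !sum3E /f_IX /= => j1211.
move: (jac_inst _ _ _ i1 i2 i1 i2 H); rewrite !sum3E /f_IX /= => j1212.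
move: (jac_inst _ _ _ i1 i2 i2 i0 H); rewrite !sum3E /f_IX /= => j1220.
move: (jac_inst _ _ _ i1 i2 i2 i1 H); rewrite !sum3E /f_IX /= => j1221.
move: (jac_inst _ _ _ i1 i2 i2 i2 H); rewrite !sum3E /f_IX /= => j1222.
apply: functional_extensionality => i; apply: functional_extensionality => j.
apply: functional_extensionality => k.
rewrite /Vf /Vvec /dl.
elim/ord3P: i => /=; elim/ord3P: j => /=; elim/ord3P: k => /=.
- by clear - a000; lra.
- by clear - a001; lra.
- by clear - a002; lra.
- by clear - a001 a111 j1201; lra.
- by clear - a000 j0102 j1222; lra.
- by clear - a012 j0202 j1212; lra.
- by clear - a222 j0100 j1220; lra.
- by clear - a021 j0101 j1221; lra.
- by clear - a022; lra.
- by clear - a111 j0112 j0222; lra.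
- by clear - a000 a110 j0210; lra.
- by clear - a012 j0202 j1212; lra.
- by clear - a110; lra.
- by clear - a111; lra.
- by clear - a112; lra.
- by clear - a120 j0101 j0202; lra.
- by clear - a121; lra.
- by clear - a122; lra.
- by clear - a002 a222 j1220; lra.
- by clear - a021 j0101 j1221; lra.
- by lra.
- by clear - a120 j0101 j0202; lra.
- by lra.
- by lra.
- by clear - a220; lra.
- by clear - a221; lra.
- by clear - a222; lra.
Qed.



Definition qe {R : realType} (w x y z : R) (i j : 'I_3) : R :=
  match nat_of_ord i, nat_of_ord j with
  | O, O => w^+2 + x^+2 - y^+2 - z^+2
  | O, S O => 2 * (x * y - w * z)
  | O, _ => 2 * (x * z + w * y)
  | S O, O => 2 * (x * y + w * z)
  | S O, S O => w^+2 - x^+2 + y^+2 - z^+2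
  | S O, _ => 2 * (y * z - w * x)
  | _, O => 2 * (x * z - w * y)
  | _, S O => 2 * (y * z + w * x)
  | _, _ => w^+2 - x^+2 - y^+2 + z^+2
  end.

Definition qrot {R : realType} (w x y z : R) : 'M[R]_3 :=
  \matrix_(i < 3, j < 3) (qe w x y z i j / (w^+2 + x^+2 + y^+2 + z^+2)).

Lemma qrot_MF (R : realType) (w x y z : R) : w^+2 + x^+2 + y^+2 + z^+2 != 0 ->
  MF (f_IX R) (qrot w x y z) (f_IX R).
Proof.
move=> hN i j c; rewrite !sum3E !mxE /f_IX /qe.
elim/ord3P: i => /=; elim/ord3P: j => /=; elim/ord3P: c => /=; field; exact: hN.
Qed.

Lemma qrot_unit (R : realType) (w x y z : R) : w^+2 + x^+2 + y^+2 + z^+2 != 0 ->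
  qrot w x y z \in unitmx.
Proof.
move=> hN.
have h : qrot w x y z *m (qrot w x y z)^T = 1%:M.
  apply/matrixP => i j; rewrite !mxE sum3E !mxE /qe.
  elim/ord3P: i => /=; elim/ord3P: j => /=; field; exact: hN.
by case: (mulmx1_unit h).
Qed.

Lemma ROT (R : realType) (v : 'I_3 -> R) (s : R) : 0 < s ->
  s ^+ 2 = v i0 ^+ 2 + v i1 ^+ 2 + v i2 ^+ 2 ->
  exists Rm : 'M[R]_3, [/\ Rm \in unitmx, MF (f_IX R) Rm (f_IX R) & forall r, Rm r i0 * s = v r].
Proof.
move=> s0 hs.
have [h0|h0] := eqVneq (s + v i0) 0.
  have e0 : v i0 = - s by lra.
  have e12 : v i1 ^+ 2 + v i2 ^+ 2 = 0 by rewrite e0 in hs; lra.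
  have e1 : v i1 = 0 by nra.
  have e2 : v i2 = 0 by nra.
  have hN : (0:R) ^+ 2 + 0 ^+ 2 + 1 ^+ 2 + 0 ^+ 2 != 0.
    by rewrite expr0n /= expr1n !add0r addr0 oner_neq0.
  exists (qrot 0 0 1 0); split; [exact: qrot_unit | exact: qrot_MF |].
  by elim/ord3P; rewrite !mxE /qe /= ?e0 ?e1 ?e2; field.
set w := s + v i0.
have hN : w ^+ 2 + 0 ^+ 2 + (- v i2) ^+ 2 + v i1 ^+ 2 != 0.
  have w0 : 0 < w ^+ 2 by rewrite exprn_even_gt0 //= h0 orbT.
  have := sqr_ge0 (v i1); have := sqr_ge0 (v i2).
  rewrite sqrrN expr0n /= => h1 h2; rewrite lt0r_neq0 //; lra.
exists (qrot w 0 (- v i2) (v i1)); split; [exact: qrot_unit | exact: qrot_MF |].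
have hn : w ^+ 2 + 0 ^+ 2 + (- v i2) ^+ 2 + v i1 ^+ 2 != 0 := hN.
elim/ord3P; rewrite !mxE /qe /= mulrAC; apply: (canLR (mulfK hn)); apply/eqP; rewrite -subr_eq0; apply/eqP.
- have -> : (w ^+ 2 + 0 ^+ 2 - (- v i2) ^+ 2 - v i1 ^+ 2) * s -
      v i0 * (w ^+ 2 + 0 ^+ 2 + (- v i2) ^+ 2 + v i1 ^+ 2) = w * (s ^+ 2 - (v i0 ^+ 2 + v i1 ^+ 2 + v i2 ^+ 2)).
    rewrite /w; ring.
  by rewrite hs subrr mulr0.
- have -> : 2 * (0 * - v i2 + w * v i1) * s -
      v i1 * (w ^+ 2 + 0 ^+ 2 + (- v i2) ^+ 2 + v i1 ^+ 2) = v i1 * (s ^+ 2 - (v i0 ^+ 2 + v i1 ^+ 2 + v i2 ^+ 2)).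
    rewrite /w; ring.
  by rewrite hs subrr mulr0.
- have -> : 2 * (0 * v i1 - w * - v i2) * s -
      v i2 * (w ^+ 2 + 0 ^+ 2 + (- v i2) ^+ 2 + v i1 ^+ 2) = v i2 * (s ^+ 2 - (v i0 ^+ 2 + v i1 ^+ 2 + v i2 ^+ 2)).
    rewrite /w; ring.
  by rewrite hs subrr mulr0.
Qed.

Lemma norm_fix (R : realType) (a b c : R) : 0 < a -> 0 <= b -> 0 <= c ->
  c = a * b -> a = b * c -> b = c * a -> a = 1.
Proof.
move=> a0 b0 c0 hc ha hb.
have hb2 : b ^+ 2 = 1.
  have e1 : a = a * b ^+ 2 by rewrite {1}ha hc; ring.
  have : a * (1 - b ^+ 2) = 0 by rewrite mulrBr mulr1 -e1 subrr.
  move/eqP; rewrite mulf_eq0 (gt_eqF a0) /= subr_eq0 => /eqP; by [].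
have b1 : b = 1 by nra.
have e : a ^+ 2 = 1 by rewrite -b1 hb hc b1; ring.
nra.
Qed.

Lemma sq3_0 (R : realType) (x y z : R) : x ^+ 2 + y ^+ 2 + z ^+ 2 = 0 ->
  x = 0 /\ y = 0 /\ z = 0.
Proof.
move=> h; have := sqr_ge0 x; have := sqr_ge0 y; have := sqr_ge0 z => hz hy hx.
have x2 : x ^+ 2 = 0 by lra.
have y2 : y ^+ 2 = 0 by lra.
have z2 : z ^+ 2 = 0 by lra.
by move: x2 y2 z2 => /eqP; rewrite expf_eq0 /= => /eqP -> /eqP; rewrite expf_eq0 /= => /eqP -> /eqP; rewrite expf_eq0 /= => /eqP ->.
Qed.

Lemma ORTH (R : realType) (C : 'M[R]_3) : C \in unitmx -> MF (f_IX R) C (f_IX R) ->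
  C i0 i0 ^+ 2 + C i1 i0 ^+ 2 + C i2 i0 ^+ 2 = 1.
Proof.
move=> uC hC.
have e00 : C i0 i0 = C i1 i1 * C i2 i2 - C i2 i1 * C i1 i2.
  by move: (hC i1 i2 i0); rewrite !sum3E /f_IX /=; lra.
have e10 : C i1 i0 = C i2 i1 * C i0 i2 - C i0 i1 * C i2 i2.
  by move: (hC i1 i2 i1); rewrite !sum3E /f_IX /=; lra.
have e20 : C i2 i0 = C i0 i1 * C i1 i2 - C i1 i1 * C i0 i2.
  by move: (hC i1 i2 i2); rewrite !sum3E /f_IX /=; lra.
have e01 : C i0 i1 = C i1 i2 * C i2 i0 - C i2 i2 * C i1 i0.
  by move: (hC i2 i0 i0); rewrite !sum3E /f_IX /=; lra.
have e11 : C i1 i1 = C i2 i2 * C i0 i0 - C i0 i2 * C i2 i0.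
  by move: (hC i2 i0 i1); rewrite !sum3E /f_IX /=; lra.
have e21 : C i2 i1 = C i0 i2 * C i1 i0 - C i1 i2 * C i0 i0.
  by move: (hC i2 i0 i2); rewrite !sum3E /f_IX /=; lra.
have e02 : C i0 i2 = C i1 i0 * C i2 i1 - C i2 i0 * C i1 i1.
  by move: (hC i0 i1 i0); rewrite !sum3E /f_IX /=; lra.
have e12 : C i1 i2 = C i2 i0 * C i0 i1 - C i0 i0 * C i2 i1.
  by move: (hC i0 i1 i1); rewrite !sum3E /f_IX /=; lra.
have e22 : C i2 i2 = C i0 i0 * C i1 i1 - C i1 i0 * C i0 i1.
  by move: (hC i0 i1 i2); rewrite !sum3E /f_IX /=; lra.
have d01 : (C i0 i0 * C i0 i1 + C i1 i0 * C i1 i1 + C i2 i0 * C i2 i1) = 0 by rewrite e00 e10 e20; ring.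
have d12 : (C i0 i1 * C i0 i2 + C i1 i1 * C i1 i2 + C i2 i1 * C i2 i2) = 0 by rewrite e01 e11 e21; ring.
have d20 : (C i0 i2 * C i0 i0 + C i1 i2 * C i1 i0 + C i2 i2 * C i2 i0) = 0 by rewrite e02 e12 e22; ring.
have l2 : (C i0 i2 ^+ 2 + C i1 i2 ^+ 2 + C i2 i2 ^+ 2) = (C i0 i0 ^+ 2 + C i1 i0 ^+ 2 + C i2 i0 ^+ 2) * (C i0 i1 ^+ 2 + C i1 i1 ^+ 2 + C i2 i1 ^+ 2) - (C i0 i0 * C i0 i1 + C i1 i0 * C i1 i1 + C i2 i0 * C i2 i1) ^+ 2 by rewrite e02 e12 e22; ring.
have l0 : (C i0 i0 ^+ 2 + C i1 i0 ^+ 2 + C i2 i0 ^+ 2) = (C i0 i1 ^+ 2 + C i1 i1 ^+ 2 + C i2 i1 ^+ 2) * (C i0 i2 ^+ 2 + C i1 i2 ^+ 2 + C i2 i2 ^+ 2) - (C i0 i1 * C i0 i2 + C i1 i1 * C i1 i2 + C i2 i1 * C i2 i2) ^+ 2 by rewrite e00 e10 e20; ring.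
have l1 : (C i0 i1 ^+ 2 + C i1 i1 ^+ 2 + C i2 i1 ^+ 2) = (C i0 i2 ^+ 2 + C i1 i2 ^+ 2 + C i2 i2 ^+ 2) * (C i0 i0 ^+ 2 + C i1 i0 ^+ 2 + C i2 i0 ^+ 2) - (C i0 i2 * C i0 i0 + C i1 i2 * C i1 i0 + C i2 i2 * C i2 i0) ^+ 2 by rewrite e01 e11 e21; ring.
rewrite d01 expr0n /= subr0 in l2; rewrite d12 expr0n /= subr0 in l0; rewrite d20 expr0n /= subr0 in l1.
have n0 : 0 < (C i0 i0 ^+ 2 + C i1 i0 ^+ 2 + C i2 i0 ^+ 2).
  rewrite lt_neqAle eq_sym; apply/andP; split; last first.
    by rewrite !addr_ge0 // sqr_ge0.
  apply/negP => /eqP h.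
  have [z0 [z1 z2]] := sq3_0 _ _ _ _ h.
  have : (invmx C *m C) i0 i0 = 1 by rewrite mulVmx // mxE.
  rewrite mxE sum3E z0 z1 z2 !mulr0 !addr0 => /eqP; by rewrite eq_sym oner_eq0.
apply: (norm_fix _ _ _ _ n0 _ _ l2 l0 l1); by rewrite !addr_ge0 // sqr_ge0.
Qed.





Arguments MF_inv {R f g A}.
Arguments MF_chain {R f g h A C}.
Arguments ORTH {R C}.
Arguments FM {R f g A}.
Arguments MF_trans {R} f {A}.
Arguments sq3_0 {R x y z}.
Arguments ROT {R v s}.

Definition wv {R : realType} (ft : sc R) : 'I_3 -> R := fun j => \sum_(i < 3) ft i j i.

Lemma w_cov (R : realType) (A : 'M[R]_3) (ft : sc R) j : A \in unitmx ->
  wv (trans_ft ft A) j = \sum_(b < 3) invmx A j b * wv ft b.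
Proof.
move=> uA.
transitivity (\sum_(b < 3) invmx A j b * \sum_(c < 3) \sum_(a < 3) (A *m invmx A) c a * ft a b c).
  rewrite /wv /trans_ft !sum3E !mxE !sum3E; ring.
rewrite mulmxV //; apply: eq_bigr => b _; congr (_ * _).
by apply: eq_bigr => c _; rewrite sum_delta_l.
Qed.

Lemma w_Vf (R : realType) (v : 'I_3 -> R) j : wv (Vf v) j = 2 * v j.
Proof. rewrite /wv /Vf /dl sum3E; elim/ord3P: j => /=; ring. Qed.

Lemma VEC1 (R : realType) (X Y : 'M[R]_3) (z : 'I_3 -> R) j : Y *m X = 1%:M ->
  \sum_(b < 3) Y j b * (\sum_(k < 3) X b k * z k) = z j.
Proof.
move=> h.
transitivity (\sum_(k < 3) (Y *m X) j k * z k); last by rewrite h sum_delta_l.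
rewrite !sum3E !mxE !sum3E; ring.
Qed.

Lemma Vf_I (R : realType) (v : 'I_3 -> R) : v i0 = 0 -> v i1 = 0 -> v i2 = 0 -> Vf v = ft_I R.
Proof.
move=> h0 h1 h2; apply: functional_extensionality => i; apply: functional_extensionality => j.
apply: functional_extensionality => k; rewrite /Vf /dl /ft_I.
elim/ord3P: i => /=; elim/ord3P: j => /=; elim/ord3P: k => /=; rewrite ?h0 ?h1 ?h2; ring.
Qed.

Lemma Vf_V (R : realType) (v : 'I_3 -> R) s : v i0 = s -> v i1 = 0 -> v i2 = 0 -> Vf v = ft_V s.
Proof.
move=> h0 h1 h2; apply: functional_extensionality => i; apply: functional_extensionality => j.
apply: functional_extensionality => k; rewrite /Vf /dl /ft_V.
elim/ord3P: i => /=; elim/ord3P: j => /=; elim/ord3P: k => /=; rewrite ?h0 ?h1 ?h2; ring.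
Qed.

Lemma wI (R : realType) j : wv (ft_I R) j = 0.
Proof. by rewrite /wv /ft_I sum3E !addr0. Qed.

Lemma wV (R : realType) (b : R) : [/\ wv (ft_V b) i0 = 2 * b, wv (ft_V b) i1 = 0 & wv (ft_V b) i2 = 0].
Proof. by split; rewrite /wv /ft_V sum3E /=; ring. Qed.

Lemma GOOD (R : realType) (f' ft' : sc R) (A : 'M[R]_3) : manin_triple f' ft' ->
  A \in unitmx -> MF f' A (f_IX R) ->
  trans_f f' A = f_IX R /\ exists v, trans_ft ft' A = Vf v.
Proof.
move=> H uA mf; have e := FM uA mf; split => //.
exists (Vvec (trans_ft ft' A)); apply: V_form; rewrite -e; exact: manin_transfer.
Qed.

Lemma zero_of (R : realType) (x b : R) : 0 < b -> 0 = x * (2 * b) -> x = 0.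
Proof.
move=> b0 /esym/eqP; rewrite mulf_eq0 => /orP [/eqP //|].
by rewrite mulf_eq0 pnatr_eq0 /= (gt_eqF b0).
Qed.

Arguments zero_of {R x b}.
Arguments GOOD {R f' ft' A}.

Lemma UNIQ (R : realType) (f' ft' : sc R) (A1 A2 : 'M[R]_3) :
  A1 \in unitmx -> A2 \in unitmx -> MF f' A1 (f_IX R) -> MF f' A2 (f_IX R) ->
  IX_normal_form (trans_ft ft' A1) -> IX_normal_form (trans_ft ft' A2) ->
  trans_ft ft' A1 = trans_ft ft' A2.
Proof.
move=> u1 u2 m1 m2 n1 n2.
set C := invmx A1 *m A2.
have mC : MF (f_IX R) C (f_IX R) := MF_chain (MF_inv u1 m1) m2.
have uC : C \in unitmx by rewrite unitmx_mul unitmx_inv u1 u2.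
have hn := ORTH uC mC.
have hw' : forall i, wv ft' i = \sum_(k < 3) A2 i k * wv (trans_ft ft' A2) k.
  move=> i; under eq_bigr do rewrite w_cov //.
  by rewrite VEC1 // mulmxV.
have hw1 : forall j, wv (trans_ft ft' A1) j = \sum_(k < 3) C j k * wv (trans_ft ft' A2) k.
  move=> j; rewrite w_cov //; under eq_bigr do rewrite hw'.
  rewrite /C !sum3E !mxE !sum3E; ring.
move: (hw1 i0) (hw1 i1) (hw1 i2); rewrite !sum3E.
case: n1 => [->|[b1 [b10 ->]]]; case: n2 => [->|[b2 [b20 ->]]] //.
- have [-> -> ->] := wV _ b2; rewrite !wI !mulr0 !addr0 => h0 h1 h2.
  move: hn; rewrite (zero_of b20 h0) (zero_of b20 h1) (zero_of b20 h2).
  by rewrite expr0n /= !addr0 => /eqP; rewrite eq_sym oner_eq0.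
- have [-> _ _] := wV _ b1; rewrite !wI !mulr0 !addr0 => h0 _ _; exfalso; lra.
- have [-> -> ->] := wV _ b1; have [-> -> ->] := wV _ b2; rewrite !mulr0 !addr0 => h0 h1 h2.
  have z1 := zero_of b20 h1; have z2 := zero_of b20 h2.
  rewrite z1 z2 expr0n /= !addr0 in hn.
  have e : b1 = C i0 i0 * b2 by lra.
  have hb : b1 = b2.
    have c0 : 0 < C i0 i0 by nra.
    have c1 : C i0 i0 = 1 by nra.
    by rewrite e c1 mul1r.
  by rewrite hb.
Qed.

Theorem mainTheorem1 (R : realType) (f' ft' : sc R) :
  manin_triple f' ft' -> lie_iso f' (f_IX R) ->
  exists! gt : sc R, IX_normal_form gt /\ manin_iso f' ft' (f_IX R) gt.
Proof.
move=> H [P [uP hP]].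
have mfP : MF (f_IX R) P f' by move=> i j c; rewrite -hP.
set A0 := invmx P.
have uA0 : A0 \in unitmx by rewrite unitmx_inv.
have mf0 : MF f' A0 (f_IX R) := MF_inv uP mfP.
suff [A [uA mfA nfA]] : exists A, [/\ A \in unitmx, MF f' A (f_IX R) & IX_normal_form (trans_ft ft' A)].
  exists (trans_ft ft' A); split.
    split => //; exists A; split => //; split => //.
    by rewrite (FM uA mfA).
  move=> gt [nf [A' [uA' [e1 e2]]]].
  have mfA' : MF f' A' (f_IX R) by rewrite e1; exact: MF_trans.
  by rewrite e2; apply: UNIQ => //; rewrite -e2.
have [_ [v0 hV0]] := GOOD H uA0 mf0.
have [hn|hn] := eqVneq (v0 i0 ^+ 2 + v0 i1 ^+ 2 + v0 i2 ^+ 2) 0.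
  have [z0 [z1 z2]] := sq3_0 hn.
  exists A0; split => //; left; rewrite hV0; exact: Vf_I.
set n := v0 i0 ^+ 2 + v0 i1 ^+ 2 + v0 i2 ^+ 2 in hn.
have n0 : 0 < n by rewrite lt_neqAle eq_sym hn /= /n !addr_ge0 // sqr_ge0.
set s := Num.sqrt n.
have s0 : 0 < s by rewrite sqrtr_gt0.
have hs : s ^+ 2 = n by rewrite sqr_sqrtr // ltW.
have [Rm [uR mfR hR]] := ROT s0 hs.
set A := A0 *m Rm.
have uA : A \in unitmx by rewrite unitmx_mul uA0 uR.
have mfA : MF f' A (f_IX R) := MF_chain mf0 mfR.
have [_ [vA hVA]] := GOOD H uA mfA.
exists A; split => //; right; exists s; split => //; rewrite hVA.
have h0 : forall j, 2 * v0 j = \sum_(b < 3) invmx A0 j b * wv ft' b.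
  by move=> j; rewrite -w_Vf -hV0 w_cov.
have hw' : forall i, wv ft' i = \sum_(k < 3) A0 i k * (2 * v0 k).
  by move=> i; under eq_bigr do rewrite h0; rewrite VEC1 // mulmxV.
have hwA : forall i, wv ft' i = A i i0 * (2 * s).
  move=> i; rewrite hw' /A mxE !sum3E -(hR i0) -(hR i1) -(hR i2); ring.
clearbody A.
have hA : forall j, 2 * vA j = (invmx A *m A) j i0 * (2 * s).
  move=> j; rewrite -w_Vf -hVA w_cov //.
  under eq_bigr do rewrite hwA.
  rewrite !sum3E !mxE !sum3E; ring.
rewrite mulVmx // in hA.
apply: Vf_V.
- by move: (hA i0); rewrite mxE /=; lra.
- by move: (hA i1); rewrite mxE /=; lra.
- by move: (hA i2); rewrite mxE /=; lra.
Qed.
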